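(* Let $\mathbf b=b_0b_1b_2\cdots\in\{1,-1\}^{\mathbb N}$. For each $t\ge2$ and $1\le u<t$, the vector \[V:=\sum_{p=0}^{2^{t-u}-1}\Delta(\ell_{t-1}+2^u p,\;2^u,\;2^{t-u})\] is a constant vector (all its $2^{t-u}$ entries are equal).
   Context: For integers $a$ and $N\ge1$, $(a \bmod N)$ denotes the unique integer in $\{0,\dots,N-1\}$ congruent to $a$ modulo $N$; we write $a\succ c \pmod N$ iff $(a\bmod N)>(c\bmod N)$. For $b\in\{-1,1\}$, $k\ge0$ and integers $0\le\ell\le n$, let $\varepsilon_{k,b}(\ell,n)=1$ if $n-\ell \succ (2+b)\cdot 2^k-(\ell+1) \pmod{2^{k+2}}$ and $\varepsilon_{k,b}(\ell,n)=0$ otherwise. For $s\ge0$, $d,m\ge1$, $\mathcal E_{k,b}(s,d,m)=\big(\varepsilon_{k,b}(s+jd,s+(j+1)d)\big)_{j=0}^{m-1}$ and $\Delta(s,d,m)=\sum_{k=0}^\infty\mathcal E_{k,b_k}(s,d,m)$. For $x_0,x_1,x_2,x_3\in\{1,-1\}$, $\ell(x_0,x_1,x_2,x_3)$ is given by the table (listing $(x_0,x_1,x_2,x_3)\mapsto \ell$): $(1,1,1,1)\mapsto7$, $(-1,1,1,1)\mapsto1$, $(1,-1,1,1)\mapsto3$, $(-1,-1,1,1)\mapsto5$, $(1,1,-1,1)\mapsto7$, $(-1,1,-1,1)\mapsto9$, $(1,-1,-1,1)\mapsto11$, $(-1,-1,-1,1)\mapsto5$, $(1,1,1,-1)\mapsto23$,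 $(-1,1,1,-1)\mapsto1$, $(1,-1,1,-1)\mapsto3$, $(-1,-1,1,-1)\mapsto21$, $(1,1,-1,-1)\mapsto23$, $(-1,1,-1,-1)\mapsto9$, $(1,-1,-1,-1)\mapsto11$, $(-1,-1,-1,-1)\mapsto21$. For $t\ge0$, $\ell_t:=2^t\,\ell(b_t,b_{t+1},b_{t+2},b_{t+3})$. *)

(* Defs.v *)
From HB Require Import structures.
From mathcomp Require Import all_boot all_order all_algebra.
From mathcomp Require Import zify.
Set Implicit Arguments. Unset Strict Implicit. Unset Printing Implicit Defensive.
Import Order.TTheory GRing.Theory Num.Theory.
Local Open Scope ring_scope.

Definition succ_mod (N : int) (a c : int) : bool := (c %% N)%Z < (a %% N)%Z.

Definition eps (k : nat) (b : int) (l n : int) : bool :=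
  succ_mod (2 ^+ (k + 2)) (n - l) ((2 + b) * 2 ^+ k - (l + 1)).

Lemma eps_vanish (k : nat) (b : int) (l n : nat) :
  (b = 1 \/ b = -1) -> (l <= n)%N -> (n < k)%N -> eps k b l%:Z n%:Z = false.
Proof.
move=> hb hln hnk.
have h2k : (n < 2 ^ k)%N by apply: leq_trans hnk (ltnW (ltn_expl _ _)).
rewrite /eps /succ_mod exprD.
have hP : (n%:Z < (2 : int) ^+ k).
  rewrite -(natrX int 2 k) -natz. lia.
set P := (2 : int) ^+ k in hP *.
have -> : (2 : int) ^+ 2 = 4 by [].
rewrite (@modz_small (n%:Z - l%:Z)); last by lia.
rewrite modz_small; last by case: hb => ->; lia.
by apply/negbTE; rewrite -leNgt; case: hb => ->; lia.
Qed.

Definition ell (x0 x1 x2 x3 : int) : nat :=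
  match x0 == 1, x1 == 1, x2 == 1, x3 == 1 with
  | true,  true,  true,  true  => 7
  | false, true,  true,  true  => 1
  | true,  false, true,  true  => 3
  | false, false, true,  true  => 5
  | true,  true,  false, true  => 7
  | false, true,  false, true  => 9
  | true,  false, false, true  => 11
  | false, false, false, true  => 5
  | true,  true,  true,  false => 23
  | false, true,  true,  false => 1
  | true,  false, true,  false => 3
  | false, false, true,  false => 21
  | true,  true,  false, false => 23
  | false, true,  false, false => 9
  | true,  false, false, false => 11
  | false, false, false, false => 21
  end.

Definition ellt (b : nat -> int) (t : nat) : nat :=
  (2 ^ t * ell (b t) (b t.+1) (b t.+2) (b t.+3))%N.

Definition Evec (k : nat) (bk : int) (s d m : nat) : 'rV[int]_m :=
  \row_(j < m) ((eps k bk (s + j * d)%N%:Z (s + j.+1 * d)%N%:Z) : int).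

(* Delta(s,d,m) = sum_{k>=0} E_{k,b_k}(s,d,m).  By eps_vanish, every term with
   k > s + m*d is the zero vector (all its entries have l <= n <= s+m*d < k),
   so the infinite sum equals the finite sum over k <= s + m*d. *)
Definition Delta (b : nat -> int) (s d m : nat) : 'rV[int]_m :=
  \sum_(k < (s + m * d).+1) Evec k (b k) s d m.

(* Main.v *)
Require Import Defs.
From mathcomp Require Import all_boot all_order all_algebra.
From mathcomp Require Import zify ring lra.
Import GRing.Theory Num.Theory.
Local Open Scope ring_scope.

Notation P n := ((2:int) ^+ n).
Lemma P_gt0 n : 0 < P n.
Proof. by rewrite exprn_gt0. Qed.

Lemma PoszX (a n : nat) : Posz (a ^ n)%N = (Posz a) ^+ n.
Proof. by rewrite -natz natrX natz. Qed.

Lemma L1 k u (bk X : int) : (bk = 1 \/ bk = -1) -> (u <= k)%N -> (P u %| X)%Z ->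
  eps k bk X (X + P u) = (P (k+2) %| (2+bk) * P k - X - P u)%Z.
Proof.
move=> hb huk /dvdzP [X' ->].
rewrite /eps /succ_mod.
have -> : X' * P u + P u - X' * P u = P u by ring.
have hk : k = (u + (k - u))%N by lia.
move: (k - u)%N hk => a hk; subst k.
rewrite !exprD.
have hPu := P_gt0 u; have hPa := P_gt0 a.
move: (P u) (P a) hPu hPa => Pu Pa hPu hPa.
have -> : (2:int) ^+ 2 = 4 by [].
have -> : Pu * Pa * 4 = Pu * (Pa * 4) by ring.
rewrite (@modz_small Pu); last by nia.
have -> : (2 + bk) * (Pu * Pa) - X' * Pu - Pu = Pu * ((2+bk)*Pa - X' - 1) by ring.
rewrite dvdz_mul2l; last by rewrite lt0r_neq0.
have hz := divz_eq ((2+bk)*Pa - X' - 1) (Pa * 4).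
have hs0 : 0 <= (((2+bk)*Pa - X' - 1) %% (Pa*4))%Z by apply: modz_ge0; nia.
have hs1 : (((2+bk)*Pa - X' - 1) %% (Pa*4))%Z < Pa * 4 by apply: ltz_pmod; nia.
rewrite (sameP dvdz_mod0P eqP).
move: (((2+bk)*Pa - X' - 1) %/ (Pa*4))%Z (((2+bk)*Pa - X' - 1) %% (Pa*4))%Z hz hs0 hs1 => q s hz hs0 hs1.
have -> : (2 + bk) * (Pu * Pa) - (X' * Pu + 1) = q * (Pu * (Pa * 4)) + (Pu * s + Pu - 1).
  apply/eqP; rewrite -subr_eq0.
  have -> : (2 + bk) * (Pu * Pa) - (X' * Pu + 1) - (q * (Pu * (Pa * 4)) + (Pu * s + Pu - 1)) = Pu * (((2+bk)*Pa - X' - 1) - (q * (Pa*4) + s)) by ring.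
  by rewrite -hz subrr mulr0.
rewrite modzMDl modz_small; last by nia.
apply/idP/eqP => h; nia.
Qed.

Definition g (A : int) (i : nat) (bb : int) : bool := (P (i+2) %| (2+bb) * P i - A)%Z.

Lemma finite_check (bb : nat -> int) : (forall i, bb i = 1 \/ bb i = -1) ->
  \sum_(i < 5) (g ((ell (bb 0%N) (bb 1%N) (bb 2%N) (bb 3%N))%:Z + 1) i (bb i) : int) =
  \sum_(i < 5) (g ((ell (bb 0%N) (bb 1%N) (bb 2%N) (bb 3%N))%:Z + 3) i (bb i) : int).
Proof.
move=> hb; rewrite !big_ord_recr !big_ord0 /=.
by case: (hb 0%N) => ->; case: (hb 1%N) => ->; case: (hb 2%N) => ->; case: (hb 3%N) => ->;
  case: (hb 4%N) => ->; reflexivity.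
Qed.

Lemma L2 k t (bk X D : int) : (k + 2 <= t)%N ->
  eps k bk (X + P t) (X + P t + D) = eps k bk X (X + D).
Proof.
move=> hkt; rewrite /eps /succ_mod.
have -> : X + P t + D - (X + P t) = X + D - X by ring.
have ht : t = ((t - (k+2)) + (k+2))%N by lia.
congr (_ < _).
rewrite ht exprD.
have -> : (2 + bk) * P k - (X + P (t - (k + 2)) * P (k + 2) + 1) =
   (- P (t - (k+2))) * P (k+2) + ((2 + bk) * P k - (X + 1)) by ring.
by rewrite modzMDl.
Qed.

Lemma L3 u a i k (b A J X : int) : k = (u + a + i)%N -> X + P u = P u * (P a * A + J) ->
  0 < J < 2 * P a ->
  (P (k+2) %| (2+b) * P k - X - P u)%Z = (J == P a) && g (A + 1) i b.
Proof.
rewrite /g.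
move=> -> hX hJ.
have hPu := P_gt0 u; have hPa := P_gt0 a.
have -> : (2+b) * P (u+a+i) - X - P u = (P u * P a) * ((2+b) * P i - A) - P u * J.
  rewrite !exprD. have -> : X = P u * (P a * A + J) - P u by rewrite -hX; ring. ring.
have -> : P (u + a + i + 2) = (P u * P a) * P (i + 2) by rewrite !exprD; ring.
have hQ : P u * P a != 0 by rewrite lt0r_neq0 // mulr_gt0.
case: eqP => [-> | hne] /=.
  have -> : P u * P a * ((2 + b) * P i - A) - P u * P a = (P u * P a) * ((2 + b) * P i - (A + 1)) by ring.
  by rewrite dvdz_mul2l.
apply/negP => h.
have h1 : (P u * P a %| P u * P a * ((2 + b) * P i - A) - P u * J)%Z.
  by apply: dvdz_trans h; apply: dvdz_mulr; apply: dvdzz.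
have h2 : (P u * P a %| P u * J)%Z.
  have -> : P u * J = P u * P a * ((2 + b) * P i - A) - (P u * P a * ((2 + b) * P i - A) - P u * J) by ring.
  by apply: rpredB => //; apply: dvdz_mulr; apply: dvdzz.
rewrite dvdz_mul2l in h2; last by rewrite lt0r_neq0.
case/dvdzP: h2 => q hq. apply: hne. rewrite hq in hJ *.
have : q = 1.
  move: hJ hPa; move: (P a) => pa /andP[g1 g2] hp. rewrite pmulr_lgt0 // in g1. rewrite ltr_pM2r // in g2. lia.
by move=> ->; rewrite mul1r.
Qed.

Lemma L_large i (bb A : int) : (5 <= i)%N -> 0 < A < 32 -> (bb = 1 \/ bb = -1) -> g A i bb = false.
Proof.
move=> hi hA hb; apply/negP => h.
have h1 : (P i %| (2+bb) * P i - A)%Z.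
  by apply: dvdz_trans h; apply: dvdz_exp2l; lia.
have h2 : (P i %| A)%Z.
  have -> : A = (2+bb) * P i - ((2+bb) * P i - A) by ring.
  by apply: rpredB => //; apply: dvdz_mull; apply: dvdzz.
have hP : 32 <= P i.
  have -> : i = (5 + (i - 5))%N by lia.
  rewrite exprD. have := P_gt0 (i-5). have -> : P 5 = 32 by []. lia.
case/dvdzP: h2 => q hq. move: hP hq hA; move: (P i) => pi hp -> /andP[g1 g2]. rewrite pmulr_lgt0 in g1; last lia. nia.
Qed.

Lemma ell_le x0 x1 x2 x3 : (ell x0 x1 x2 x3 <= 23)%N.
Proof. by rewrite /ell; case: (x0 == 1); case: (x1 == 1); case: (x2 == 1); case: (x3 == 1). Qed.

Section Main.
Variable b : nat -> int.
Hypothesis hb : forall i, b i = 1 \/ b i = -1.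
Variables t u : nat.
Hypothesis ht : (2 <= t)%N.
Hypothesis hu1 : (1 <= u)%N.
Hypothesis hut : (u < t)%N.

Definition S N x := \sum_(k < N) (eps k (b k) x%:Z (x + 2 ^ u)%N%:Z : int).

Lemma S_narrow N x : (x + 2 ^ u < N)%N -> S N x = S (x + 2 ^ u).+1 x.
Proof.
move=> hN; rewrite /S [RHS](big_ord_widen N (fun k => (eps k (b k) x%:Z (x + 2 ^ u)%N%:Z : int)) hN).
rewrite [RHS]big_mkcond /=; apply: eq_bigr => k _.
case: ifP => // hk. rewrite eps_vanish //; first by lia. by rewrite ltnNge -ltnS hk.
Qed.

Lemma S_stable N1 N2 x : (x + 2 ^ u < N1)%N -> (x + 2 ^ u < N2)%N -> S N1 x = S N2 x.
Proof. by move=> h1 h2; rewrite S_narrow // [RHS]S_narrow. Qed.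

End Main.
Lemma PoszX2 n : Posz (2 ^ n)%N = (2:int) ^+ n.
Proof. by rewrite PoszX. Qed.
Section Main2.
Variable b : nat -> int.
Hypothesis hb : forall i, b i = 1 \/ b i = -1.
Variables t u : nat.
Hypothesis ht : (2 <= t)%N.
Hypothesis hu1 : (1 <= u)%N.
Hypothesis hut : (u < t)%N.

Lemma key (R : nat) (j : nat) : (j.+2 <= 2 ^ (t - u))%N ->
  let x := (ellt b t.-1 + 2 ^ u * j)%N in
  S b u (t.-1 + (5 + R)) (x + 2 ^ t) = S b u (t.-1 + (5 + R)) x.
Proof.
move=> hj x.
set T := t.-1.
have hT : t = T.+1 by rewrite /T; lia.
set a := (T - u)%N.
have hTa : T = (u + a)%N by rewrite /a; lia.
set l := ell (b T) (b T.+1) (b T.+2) (b T.+3).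
have hx : x = (2 ^ T * l + 2 ^ u * j)%N by [].
have hPT : P T = P u * P a by rewrite hTa exprD.
have hPt : P t = P u * P a * 2 by rewrite hT exprS hPT; ring.
rewrite /S !big_split_ord /=.
congr (_ + _).
  apply: eq_bigr => k _.
  rewrite !PoszD !PoszX.
  have := @L2 k t (b k) (Posz x) (P u) (_ : (k + 2 <= t)%N).
  move=> ->; first by [].
  have := ltn_ord k; lia.
have hJ : 0 < Posz j.+1 < 2 * P a.
  have e : (t - u = a.+1)%N by rewrite /a; lia.
  have : (j.+1 < 2 ^ a.+1)%N by rewrite -e.
  rewrite -ltz_nat PoszX exprS => ->; by rewrite andbT.
have hl : (l <= 23)%N by apply: ell_le.
have E1 : forall i, eps (T + i) (b (T + i)) x (x + 2 ^ u)%N =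
    (Posz j.+1 == P a) && g (Posz l + 1) i (b (T + i)).
  move=> i; rewrite (PoszD x (2 ^ u)%N) PoszX2 L1; [|exact: hb|lia|].
    apply: (@L3 u a i (T + i)); first by lia.
      rewrite hx PoszD !PoszM !PoszX2 hPT. ring.
    exact: hJ.
  apply/dvdzP; exists (P a * Posz l + Posz j).
  rewrite hx PoszD !PoszM !PoszX2 hPT. ring.
have E2 : forall i, eps (T + i) (b (T + i)) (x + 2 ^ t)%N (x + 2 ^ t + 2 ^ u)%N =
    (Posz j.+1 == P a) && g (Posz l + 3) i (b (T + i)).
  move=> i; rewrite (PoszD (x + 2 ^ t)%N (2 ^ u)%N) PoszX2 L1; [|exact: hb|lia|].
    have -> : Posz l + 3 = (Posz l + 2) + 1 by ring.
    apply: (@L3 u a i (T + i)); first by lia.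
      rewrite hx !PoszD !PoszM !PoszX2 hPT hPt. ring.
    exact: hJ.
  apply/dvdzP; exists (P a * (Posz l + 2) + Posz j).
  rewrite hx !PoszD !PoszM !PoszX2 hPT hPt. ring.
under eq_bigr => i _ do rewrite E2.
under [X in _ + X = _]eq_bigr => i _ do rewrite E2.
under [X in _ = X + _]eq_bigr => i _ do rewrite E1.
under [X in _ = _ + X]eq_bigr => i _ do rewrite E1.
case: eqP => _ /=; last by rewrite !big1.
have Z : forall A, 0 < A < 32 -> \sum_(i < R) (g A (5 + i) (b (T + (5 + i))) : int) = 0.
  move=> A hA; apply: big1 => i _; by rewrite L_large //; lia.
rewrite !Z; try (apply/andP; split; lia).
rewrite !addr0.
have := finite_check (fun i => b (T + i)) (fun i => hb (T + i)).
by rewrite /= addn0 addn1 addn2 addn3.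
Qed.
End Main2.
Theorem lemma5p3 (b : nat -> int) (hb : forall i, b i = 1 \/ b i = -1)
  (t u : nat) (ht : (2 <= t)%N) (hu1 : (1 <= u)%N) (hut : (u < t)%N) :
  exists c : int,
    \sum_(p < 2 ^ (t - u)) Delta b (ellt b t.-1 + 2 ^ u * p) (2 ^ u) (2 ^ (t - u))
    = const_mx c.
Proof.
set m := (2 ^ (t - u))%N.
set L := ellt b t.-1.
have hm : (2 ^ u * m = 2 ^ t)%N by rewrite /m -expnD subnKC // ltnW.
have hm2 : (2 <= m)%N.
  rewrite /m. have -> : (t - u = (t - u).-1.+1)%N by lia. rewrite expnS.
  have := expn_gt0 2 (t - u).-1; lia.
set N0 := (t.-1 + (5 + (L + 3 * 2 ^ t)))%N.
pose h q := S b u N0 (L + 2 ^ u * q)%N.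
have hper : forall j, (j.+2 <= m)%N -> h (j + m)%N = h j.
  move=> j hj; rewrite /h.
  have -> : (L + 2 ^ u * (j + m) = (L + 2 ^ u * j) + 2 ^ t)%N by rewrite mulnDr hm addnA.
  exact: key.
have hshift : forall j, (j < m)%N -> \sum_(p < m) h (p + j)%N = \sum_(p < m) h p.
  elim=> [|j IH] hj.
    by apply: eq_bigr => p _; rewrite addn0.
  rewrite -IH; last by lia.
  have -> : m = (m.-1).+1 by lia.
  rewrite big_ord_recr big_ord_recl.
  rewrite addrC; congr (_ + _).
    apply: eq_bigr => p _; apply: (congr1 h) => /=; rewrite /bump leq0n add1n; lia.
  rewrite /= add0n -(hper j); last by lia.
  apply: (congr1 h); lia.
exists (\sum_(p < m) h p).
apply/matrixP => i j; rewrite mxE summxE -(hshift j) //.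
apply: eq_bigr => p _.
rewrite /Delta summxE.
under eq_bigr => k _ do rewrite mxE.
have e1 : (L + 2 ^ u * p + j * 2 ^ u = L + 2 ^ u * (p + j))%N by lia.
have e2 : (L + 2 ^ u * p + j.+1 * 2 ^ u = L + 2 ^ u * (p + j) + 2 ^ u)%N by lia.
rewrite e1 e2.
rewrite /h -(@S_stable b hb t u ht hu1 hut (L + 2 ^ u * p + m * 2 ^ u).+1) //.
- have := ltn_ord j; have := ltn_ord p; nia.
- have := ltn_ord j; have := ltn_ord p; rewrite /N0 -hm; nia.
Qed.
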